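(* Let $X,Y$ be Banach lattices and $S\colon X\to Y$ bounded and convex. Then $S$ is Lipschitz on bounded subsets: for every $r>0$ there exists $L>0$ with $\|Sx-Sy\|\le L\|x-y\|$ for all $x,y\in X$ with $\|x\|\le r$, $\|y\|\le r$.
   Context: An operator $S\colon X\to Y$ is convex if $S(\lambda x+(1-\lambda)y)\le\lambda Sx+(1-\lambda)Sy$ for all $x,y\in X$, $\lambda\in[0,1]$, and bounded if $\sup_{\|x\|\le r}\|Sx\|<\infty$ for every $r>0$. *)

(* Defs.v *)
From HB Require Import structures.
From mathcomp Require Import all_boot all_order all_algebra.
From mathcomp Require Import all_classical all_reals all_analysis.
Set Implicit Arguments. Unset Strict Implicit. Unset Printing Implicit Defensive.
Import Order.TTheory GRing.Theory Num.Theory.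
Import numFieldNormedType.Exports.
Local Open Scope ring_scope.

Section BL.
Variables (R : realType) (V : completeNormedModType R) (le : V -> V -> Prop).

Definition is_sup (x y z : V) : Prop :=
  [/\ le x z, le y z & forall w, le x w -> le y w -> le z w].

Definition is_modulus (x a : V) : Prop := is_sup x (- x) a.

(** [le] makes the Banach space [V] a (real) Banach lattice:
    an ordered vector space (partial order compatible with addition and
    nonnegative scaling) that is a lattice (any two elements have a supremum;
    infima then exist as x /\ y = -((-x) \/ (-y))), with a lattice norm
    (|x| <= |y| implies ||x|| <= ||y||). Completeness comes from
    [completeNormedModType]. *)
Record banach_lattice : Prop := BanachLattice {
  bl_refl : forall x, le x x;
  bl_antisym : forall x y, le x y -> le y x -> x = y;
  bl_trans : forall x y z, le x y -> le y z -> le x z;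
  bl_add : forall x y z, le x y -> le (x + z) (y + z);
  bl_scale : forall (a : R) x y, 0 <= a -> le x y -> le (a *: x) (a *: y);
  bl_sup : forall x y, exists z, is_sup x y z;
  bl_norm : forall x y ax ay, is_modulus x ax -> is_modulus y ay ->
      le ax ay -> `|x| <= `|y|
}.
End BL.

Definition convex_op (R : realType) (X Y : normedModType R)
  (leY : Y -> Y -> Prop) (S : X -> Y) : Prop :=
  forall (x y : X) (l : R), 0 <= l <= 1 ->
    leY (S (l *: x + (1 - l) *: y)) (l *: S x + (1 - l) *: S y).

Definition bounded_op (R : realType) (X Y : normedModType R) (S : X -> Y) : Prop :=
  forall r : R, 0 < r -> exists M : R, forall x : X, `|x| <= r -> `|S x| <= M.

(* Main.v *)
Require Import Defs.
From mathcomp Require Import all_boot all_order all_algebra.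
From mathcomp Require Import all_classical all_reals all_analysis.
From mathcomp Require Import ring lra.
Import Order.TTheory GRing.Theory Num.Theory.
Import numFieldNormedType.Exports.
Local Open Scope ring_scope.

Section Lat.
Variables (R : realType) (V : completeNormedModType R) (le : V -> V -> Prop).
Hypothesis hV : banach_lattice le.

Lemma le_sub0 {a b : V} : le a b -> le 0 (b - a).
Proof. by move=> h; have := bl_add hV (- a) h; rewrite subrr. Qed.

Lemma le_add0 {a b : V} : le 0 b -> le a (a + b).
Proof. by move=> h; have := bl_add hV a h; rewrite add0r addrC. Qed.

Lemma mod_ge0 {a m : V} : is_modulus le a m -> le 0 m.
Proof.
case=> h1 h2 _.
have e1 : le 0 (m - a) by apply: le_sub0.
have e2 : le (m - a) (m + m).
  by have := bl_add hV m h2; rewrite addrC [m + m]addrC.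
have e3 := bl_trans hV e1 e2.
have h0 : (0:R) <= 2^-1 by rewrite invr_ge0.
have := bl_scale hV h0 e3.
rewrite scaler0 -mulr2n -[m *+ 2]scaler_nat scalerA mulVf ?scale1r //.
Qed.

Lemma mod_pos {w : V} : le 0 w -> is_modulus le w w.
Proof.
move=> h; split; first exact: bl_refl.
- apply: (bl_trans hV _ h).
  by have := bl_add hV (- w) h; rewrite add0r subrr.
- by [].
Qed.

Lemma norm_mod {a m : V} : is_modulus le a m -> `|m| <= `|a|.
Proof.
move=> hm; apply: (bl_norm hV (mod_pos (mod_ge0 hm)) hm).
exact: bl_refl.
Qed.

Lemma bl_bound {u b b' : V} : le u b -> le (- u) b' -> `|u| <= `|b| + `|b'|.
Proof.
move=> hb hb'.
have [ab hab] := bl_sup hV b (- b).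
have [ab' hab'] := bl_sup hV b' (- b').
have [au hau] := bl_sup hV u (- u).
have p1 := mod_ge0 hab; have p2 := mod_ge0 hab'.
have w0 : le 0 (ab + ab') by exact: (bl_trans hV p1 (@le_add0 ab ab' p2)).
case: (hab) => [hb1 hb2 hb3]; case: (hab') => [hc1 hc2 hc3].
case: (hau) => [hu1 hu2 hu3].
have u1 : le u (ab + ab') by exact: (bl_trans hV hb (bl_trans hV hb1 (@le_add0 ab ab' p2))).
have u2 : le (- u) (ab + ab').
  apply: (bl_trans hV hb' (bl_trans hV hc1 _)).
  by rewrite addrC; apply: (@le_add0 ab' ab p1).
have h := bl_norm hV hau (mod_pos w0) (hu3 _ u1 u2).
apply: (le_trans h); apply: (le_trans (ler_normD _ _)).
by apply: lerD; apply: norm_mod.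
Qed.

End Lat.

Lemma side (R : realType) (X Y : completeNormedModType R)
  (leY : Y -> Y -> Prop) (hY : banach_lattice leY) (S : X -> Y) (r : R) (p q : X) :
  convex_op leY S -> 0 < r -> `|q| <= r -> 0 < `|q - p| ->
  exists z : X, `|z| <= 2 * r /\
    leY (S q - S p) ((`|q - p| / (`|q - p| + r)) *: (S z - S p)).
Proof.
move=> conv r0 hq d0.
set d := `|q - p| in d0 *.
set l := d / (d + r).
set c := r / d.
exists (q + c *: (q - p)); split.
  apply: (le_trans (ler_normD _ _)).
  rewrite normrZ ger0_norm; last by rewrite divr_ge0 // ltW.
  rewrite -/d divfK; last by rewrite gt_eqF.
  lra.
have lc : l * c = 1 - l.
  rewrite /l /c; field.
  by apply/andP; split; rewrite gt_eqF //; lra.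
have hl : 0 <= l <= 1.
  apply/andP; split; first by rewrite divr_ge0 //; lra.
  by rewrite ler_pdivrMr ?mul1r; lra.
have eq : l *: (q + c *: (q - p)) + (1 - l) *: p = q.
  rewrite scalerDr scalerA lc -addrA -scalerDr subrK -scalerDl.
  by rewrite addrCA subrr addr0 scale1r.
have := conv (q + c *: (q - p)) p l hl.
rewrite eq => h.
have := bl_add hY (- S p) h.
congr leY.
by rewrite scalerBr scalerBl scale1r addrA addrAC addrK scalerBr.
Qed.

Theorem corollaryA4 (R : realType) (X Y : completeNormedModType R)
  (leX : X -> X -> Prop) (leY : Y -> Y -> Prop)
  (hX : banach_lattice leX) (hY : banach_lattice leY) (S : X -> Y) :
  convex_op leY S -> bounded_op S ->
  forall r : R, 0 < r -> exists L : R, 0 < L /\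
    forall x y : X, `|x| <= r -> `|y| <= r -> `|S x - S y| <= L * `|x - y|.
Proof.
move=> conv bnd r r0.
have r20 : 0 < 2 * r by lra.
have [M hM] := bnd (2 * r) r20.
have M0 : 0 <= M.
  by apply: le_trans (hM 0 _); rewrite ?normr0 ?normr_ge0 //; lra.
exists (4 * M / r + 1); split.
  have : 0 <= 4 * M / r by rewrite divr_ge0 //; lra.
  move=> ?; lra.
move=> x y hx hy.
have [->|nxy] := eqVneq x y.
  by rewrite !subrr !normr0 mulr0.
have d0 : 0 < `|y - x| by rewrite normr_gt0 subr_eq0 eq_sym.
have d0' : 0 < `|x - y| by rewrite normr_gt0 subr_eq0.
have [z [hz h1]] := @side _ _ _ _ hY S r x y conv r0 hy d0.
have [z' [hz' h2]] := @side _ _ _ _ hY S r y x conv r0 hx d0'.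
rewrite distrC in h2.
set d := `|y - x| in h1 h2 d0.
set l := d / (d + r) in h1 h2.
have hl0 : 0 <= l by rewrite divr_ge0 //; lra.
have hld : l * (d + r) = d by rewrite /l divfK // gt_eqF //; lra.
rewrite -opprB in h2.
have hb := @bl_bound _ _ _ hY _ _ _ h1 h2.
rewrite distrC -/d.
have bz : `|S z - S x| <= M + M.
  apply: le_trans (ler_normB _ _) _; apply: lerD; apply: hM => //; lra.
have bz' : `|S z' - S y| <= M + M.
  apply: le_trans (ler_normB _ _) _; apply: lerD; apply: hM => //; lra.

apply: (le_trans hb).
have nz : forall v : Y, `|l *: v| = l * `|v| by move=> v; rewrite normrZ (ger0_norm hl0).
rewrite !nz [`|x - y|]distrC -/d.
have e : (4 * M / r) * r = 4 * M by rewrite divfK // gt_eqF.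
have K0 : 0 <= 4 * M / r by rewrite divr_ge0 //; lra.
set K := 4 * M / r in e K0 *.
set N1 := `|S z - S x| in bz *; set N2 := `|S z' - S y| in bz' *.
have f1 : l * N1 + l * N2 <= l * (4 * M) by nra.
have f0 : 0 <= K * l * d by apply: mulr_ge0; [apply: mulr_ge0|]; lra.
have f2 : l * (4 * M) <= K * d.
  rewrite -e -hld; nra.
nra.
Qed.
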